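(* Let $G$ be a weakly-reversible chemical reaction network in $s$ species and let $Z\subseteq\{1,\dots,s\}$ be nonempty. Then $Z$ is a siphon of $G$ if and only if there exists $\alpha\in\mathbb{R}^s_{\ge0}\cap V_{\mathbb{R}}(\mathcal{E}_G)$ with $Z=\{i:\alpha_i=0\}$. Moreover, $Z$ is a critical siphon if and only if there exists such an $\alpha$ for which, in addition, the invariant polyhedron containing $\alpha$ intersects $\mathbb{R}^s_{>0}$.
   Context: A chemical reaction network (CRN) consists of positive integers $s,n$, a finite directed graph $G$ with vertex set $\{1,\dots,n\}$ and edge set $E(G)$, and an injective labeling of vertex $i$ by a monic monomial $\psi_i=\prod_{j=1}^s x_j^{y_{ij}}$, $y_i=(y_{i1},\dots,y_{is})$. $G$ is weakly-reversible iff each connected component is strongly connected. The associated event-system $\mathcal{E}_G$ is the set of binomials $\psi_i-\psi_j$, one for each pair $\{i,j\}$ with $(i,j)\in E(G)$ or $(j,i)\in E(G)$; $V_{\mathbb{R}}(\mathcal{E}_G)\subseteq\mathbb{R}^s$ is its real zero set. The stoichiometric subspace is $S_G=\mathrm{span}\{y_i-y_j:(i,j)\in E(G)\}$, and for $x\in\mathbb{R}^s_{\ge0}$ the invariant polyhedron containing $x$ is $(x+S_G)\cap\mathbb{R}^s_{\ge0}$. A nonempty $Z\subseteq\{1,\dots,s\}$ is a siphon iff for every $(i,j)\in E(G)$, if $x_k\mid\psi_j$ for some $k\in Z$ then $x_l\mid\psi_i$ for some $l\in Z$. A siphon $Z$ is critical iff there is $z\in\mathbb{R}^s_{\ge0}$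 with $Z=\{i:z_i=0\}$ such that the invariant polyhedron containing $z$ meets $\mathbb{R}^s_{>0}$. *)

(* Defs.v *)
From HB Require Import structures.
From mathcomp Require Import all_boot all_order all_algebra.
From mathcomp Require Import reals.
Set Implicit Arguments. Unset Strict Implicit. Unset Printing Implicit Defensive.
Import Order.TTheory GRing.Theory Num.Theory.
Local Open Scope ring_scope.

(* A CRN: s species, n complexes, directed graph G : rel 'I_n on vertices
   {0,..,n-1}, and complex i labelled by the monic monomial
   psi_i = prod_j x_j ^ (y i j); the labelling is injective (injective y). *)

Section CRN.
Variables (R : realType) (s n : nat).
Implicit Types (G : rel 'I_n) (y : 'I_n -> 'I_s -> nat) (x : 'I_s -> R).

Definition psi y (i : 'I_n) x : R := \prod_(j < s) x j ^+ y i j.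

Definition undirected G : rel 'I_n := fun i j => G i j || G j i.

Definition weakly_reversible G : Prop :=
  forall i j, connect (undirected G) i j -> connect G i j.

Definition in_event_variety G y x : Prop :=
  forall i j, undirected G i j -> psi y i x - psi y j x = 0.

Definition nonneg x : Prop := forall k, 0 <= x k.
Definition positive x : Prop := forall k, 0 < x k.

Definition in_stoich G y (v : 'I_s -> R) : Prop :=
  exists c : 'I_n -> 'I_n -> R,
    forall k, v k = \sum_(i < n) \sum_(j < n | G i j)
                      c i j * ((y i k)%:R - (y j k)%:R).

Definition inv_polyhedron G y x (w : 'I_s -> R) : Prop :=
  in_stoich G y (fun k => w k - x k) /\ nonneg w.

Definition polyhedron_meets_pos G y x : Prop :=
  exists w, inv_polyhedron G y x w /\ positive w.

Definition zero_set x : {set 'I_s} := [set k | x k == 0].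

(* siphon: x_k | psi_j iff y j k >= 1 *)
Definition siphon G y (Z : {set 'I_s}) : Prop :=
  Z != set0 /\
  forall i j, G i j ->
    (exists2 k, k \in Z & (0 < y j k)%N) ->
    (exists2 l, l \in Z & (0 < y i l)%N).

Definition critical_siphon G y (Z : {set 'I_s}) : Prop :=
  siphon G y Z /\
  exists z, nonneg z /\ Z = zero_set z /\ polyhedron_meets_pos G y z.

End CRN.

(* Main.v *)
Require Import Defs.
From HB Require Import structures.
From mathcomp Require Import all_boot all_order all_algebra.
From mathcomp Require Import reals.
From mathcomp Require Import ring lra.
Import Order.TTheory GRing.Theory Num.Theory.
Local Open Scope ring_scope.

Lemma connect_back (T : finType) (e : rel T) (P : T -> Prop) :
  (forall a b, e a b -> P b -> P a) ->
  forall a b, connect e a b -> P b -> P a.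
Proof.
move=> H a b /connectP [p pth ->]; elim: p a pth => //= c p IH a /andP[eac pth] Pb.
exact: (H a c eac (IH c pth Pb)).
Qed.

Lemma psi_eq0 (R : realType) (s n : nat) (y : 'I_n -> 'I_s -> nat)
  (x : 'I_s -> R) i :
  (psi y i x == 0) = [exists l, (x l == 0) && (0 < y i l)%N].
Proof.
apply/prodf_eq0/existsP => [[l _]|[l /andP[h1 h2]]].
  by rewrite expf_eq0 => /andP[h1 h2]; exists l; rewrite h1 h2.
by exists l => //; rewrite expf_eq0 h1 h2.
Qed.

Section Main.
Variables (R : realType) (s n : nat) (G : rel 'I_n) (y : 'I_n -> 'I_s -> nat).

Lemma siphon_of_alpha (Z : {set 'I_s}) (hZ : Z != set0) (alpha : 'I_s -> R) :
  in_event_variety G y alpha -> Z = zero_set alpha -> siphon G y Z.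
Proof.
move=> hev hz; split => //; rewrite hz.
move=> i j gij [k hk hyk].
have hj : psi y j alpha = 0.
  apply/eqP; rewrite psi_eq0; apply/existsP; exists k.
  by rewrite hyk andbT; move: hk; rewrite inE.
have : psi y i alpha = 0.
  by have := hev i j; rewrite /undirected gij /= hj subr0 => ->.
move/eqP; rewrite psi_eq0 => /existsP [l /andP[h1 h2]].
by exists l => //; rewrite inE.
Qed.

Definition ind (Z : {set 'I_s}) : 'I_s -> R := fun k => if k \in Z then 0 else 1.

Lemma ind_zero (Z : {set 'I_s}) : zero_set (ind Z) = Z.
Proof.
apply/setP => k; rewrite inE /ind; case: (k \in Z) => //=.
  by rewrite eqxx.
by rewrite oner_eq0.
Qed.

Lemma ind_nonneg (Z : {set 'I_s}) : nonneg (ind Z).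
Proof. by move=> k; rewrite /ind; case: (k \in Z). Qed.

Lemma psi_ind (Z : {set 'I_s}) i :
  psi y i (ind Z) = if [exists l, (ind Z l == 0) && (0 < y i l)%N] then 0 else 1.
Proof.
case: ifP => h; first by apply/eqP; rewrite psi_eq0.
apply: big1 => j _; rewrite /ind; case: ifP => hj; last by rewrite expr1n.
case: (posnP (y i j)) => [->|hp]; first by rewrite expr0.
suff: false by []. by rewrite -h; apply/existsP; exists j; rewrite /ind hj eqxx hp.
Qed.

Lemma ind_event (Z : {set 'I_s}) :
  weakly_reversible G -> siphon G y Z -> in_event_variety G y (ind Z).
Proof.
move=> hwr [_ hsi].
pose P := fun i => [exists l, (ind Z l == 0) && (0 < y i l)%N] : Prop.
have hcl : forall a b, G a b -> P b -> P a.
  move=> a b gab /existsP [l /andP[h1 h2]].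
  have [|l' hl' h'] := hsi a b gab.
    by exists l => //; move: h1; rewrite /ind; case: ifP => //; rewrite oner_eq0.
  by apply/existsP; exists l'; rewrite /ind hl' eqxx h'.
have key : forall i j, G i j -> P i <-> P j.
  move=> i j gij; split; last exact: hcl.
  move=> Pi; apply: (@connect_back _ _ P hcl j i _ Pi); apply: hwr.
  by apply: connect1; rewrite /undirected gij orbT.
move=> i j /orP [gij|gji]; rewrite !psi_ind.
  have := key i j gij; rewrite /P.
  by case: [exists l, _]; case: [exists l, _] => [] [h1 h2];
    rewrite ?subrr //; first [by have := h1 isT | by have := h2 isT].
have := key j i gji; rewrite /P.
by case: [exists l, _]; case: [exists l, _] => [] [h1 h2];
  rewrite ?subrr //; first [by have := h1 isT | by have := h2 isT].
Qed.

End Main.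

Theorem lemma4p6 (R : realType) (s n : nat) (hs : (0 < s)%N) (hn : (0 < n)%N)
    (G : rel 'I_n) (y : 'I_n -> 'I_s -> nat) (hy : injective y)
    (hwr : weakly_reversible G) (Z : {set 'I_s}) (hZ : Z != set0) :
  (siphon G y Z <->
     exists alpha : 'I_s -> R,
       nonneg alpha /\ in_event_variety G y alpha /\ Z = zero_set alpha) /\
  (critical_siphon R G y Z <->
     exists alpha : 'I_s -> R,
       [/\ nonneg alpha, in_event_variety G y alpha, Z = zero_set alpha
         & polyhedron_meets_pos G y alpha]).
Proof.
split; split.
- move=> hsi; exists (ind R s Z); split; first exact: ind_nonneg.
  by split; [exact: ind_event | rewrite ind_zero].
- by move=> [a [_ [ha hz]]]; exact: (@siphon_of_alpha R s n G y Z hZ _ ha hz).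
- move=> [hsi [z [hz [hzZ [w [[[c hc] hw] hwp]]]]]].
  pose S := \sum_(k < s) `|w k - z k|.
  have S0 : 0 <= S by apply: sumr_ge0 => k _.
  pose lam := (1 + S)^-1.
  have lam0 : 0 < lam by rewrite invr_gt0; lra.
  exists (ind R s Z); split; first exact: ind_nonneg.
  + exact: ind_event.
  + by rewrite ind_zero.
  have hpos : positive (fun k => ind R s Z k + lam * (w k - z k)).
    move=> k; rewrite /ind; case: ifP => hk.
      have : z k = 0 by apply/eqP; move: hk; rewrite hzZ inE.
      by move=> ->; rewrite add0r subr0 mulr_gt0.
    have hdS : `|w k - z k| <= S.
      by rewrite /S (bigD1 k) //= ler_wpDr // sumr_ge0.
    have h1 : w k - z k <= `|w k - z k| := ler_norm _.
    have h2 : - (w k - z k) <= `|w k - z k|.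
      by rewrite -normrN; exact: ler_norm.
    have -> : 1 + lam * (w k - z k) = lam * ((1 + S) + (w k - z k)).
      rewrite /lam; field; apply/eqP; lra.
    by apply: mulr_gt0 => //; lra.
  exists (fun k => ind R s Z k + lam * (w k - z k)); split => //.
  split; last by move=> k; apply: ltW.
  exists (fun i j => lam * c i j) => k.
  rewrite addrC addKr hc mulr_sumr; apply: eq_bigr => i _.
  by rewrite mulr_sumr; apply: eq_bigr => j _; rewrite mulrA.
- move=> [a [ha hev hz hp]]; split; first exact: (@siphon_of_alpha R s n G y Z hZ _ hev hz).
  by exists a.
Qed.
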